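(* Let $G$ be a graph of order $n$ with maximum degree $\Delta$ and with $s'$ strong support vertices. Then $\gamma_{cI}(G)\ge \frac{2(n+s')}{\Delta+2}$, and this bound is sharp.
   Context: All graphs are finite and simple; $N(v)$ is the open neighborhood of $v$. A leaf is a vertex of degree one; a support vertex is a vertex adjacent to a leaf; a support vertex is strong if it is adjacent to more than one leaf. For $f:V(G)\to\{0,1,2\}$ let $V_i=\{v: f(v)=i\}$ and $\omega(f)=\sum_v f(v)$. A covering Italian dominating function (CID function) of $G$ is an $f:V(G)\to\{0,1,2\}$ such that every vertex $v$ with $f(v)=0$ satisfies $\sum_{u\in N(v)}f(u)\ge 2$, and $V_0$ is an independent set. $\gamma_{cI}(G)$ is the minimum of $\omega(f)$ over all CID functions of $G$. *)

(* Defs.v *)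
From mathcomp Require Import all_boot all_order all_algebra.
Set Implicit Arguments. Unset Strict Implicit. Unset Printing Implicit Defensive.

(* A finite simple graph: vertex type T : finType, adjacency e : rel T,
   assumed symmetric and irreflexive (hypotheses in the theorem). *)
Section Graph.
Variables (T : finType) (e : rel T).

Definition nbhd (v : T) : {set T} := [set u | e v u].
Definition deg (v : T) : nat := #|nbhd v|.
(* maximum degree (0 for the empty graph) *)
Definition maxdeg : nat := \max_(v : T) deg v.
Definition leaf (v : T) : bool := deg v == 1.
Definition support_vertex (v : T) : bool := [exists u, leaf u && e v u].
Definition strong_support (v : T) : bool := 1 < #|[set u | e v u & leaf u]|.
Definition num_strong_support : nat := #|[set v | strong_support v]|.

Definition weight (f : {ffun T -> 'I_3}) : nat := \sum_(v : T) (f v : nat).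
Definition isCID (f : {ffun T -> 'I_3}) : bool :=
  [forall v, ((f v : nat) == 0) ==> (2 <= \sum_(u in nbhd v) (f u : nat))]
  && [forall u, forall v, e u v ==> ~~ (((f u : nat) == 0) && ((f v : nat) == 0))].

(* gamma_cI(G): minimum weight of a CID function. The constant-1 function is
   a CID function of weight #|T|, so #|T| is a valid initial value. *)
Definition gamma_cI : nat :=
  \big[minn/#|T|]_(f : {ffun T -> 'I_3} | isCID f) weight f.
End Graph.

(* Main.v *)
Require Import Defs.
From mathcomp Require Import all_boot all_order all_algebra zify.
Import Order.TTheory GRing.Theory Num.Theory.

Lemma sum_nbhd (T : finType) (e : rel T) x (g : T -> nat) :
  \sum_(u in nbhd e x) g u = \sum_u (e x u) * g u.
Proof. rewrite big_mkcond; apply eq_bigr => u _; rewrite inE; by case: (e x u); rewrite ?mul1n ?mul0n. Qed.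

Lemma degE (T : finType) (e : rel T) x : deg e x = \sum_u (e x u : nat).
Proof. rewrite /deg -sum1_card sum_nbhd; apply eq_bigr => u _; by rewrite muln1. Qed.

Lemma deg_max (T : finType) (e : rel T) x : deg e x <= maxdeg e.
Proof. exact: (@leq_bigmax _ (fun v => deg e v) x). Qed.

Lemma strong_deg (T : finType) (e : rel T) v : strong_support e v -> 2 <= deg e v.
Proof.
rewrite /strong_support /deg => H; apply: leq_trans H _; apply subset_leq_card.
by apply/subsetP => u; rewrite !inE => /andP[].
Qed.

Lemma leaf_nbhd (T : finType) (e : rel T) x v : leaf e x -> e x v -> nbhd e x = [set v].
Proof.
rewrite /leaf /deg => /cards1P [y Hy] Hv.
have: v \in nbhd e x by rewrite inE.
by rewrite Hy inE => /eqP ->.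
Qed.

Lemma local (T : finType) (e : rel T) (f : {ffun T -> 'I_3}) x :
  isCID e f ->
  2 + (f x : nat) * \sum_u (e x u && ((f u : nat) == 0))
  + (2 * (strong_support e x && ((f x : nat) == 2))
     + leaf e x * \sum_v (e x v && strong_support e v && ((f v : nat) <= 1)))
  <= (maxdeg e + 2) * (f x : nat) + ((f x : nat) == 0) * \sum_(u in nbhd e x) (f u : nat).
Proof.
move=> /andP[/forallP H0 _].
have hf : (f x : nat) < 3 := ltn_ord _.
have dmax := @deg_max _ e x.
have N0le : \sum_u (e x u && ((f u : nat) == 0)) <= deg e x.
  by rewrite degE; apply leq_sum => u _; case: (e x u) => //=; exact: leq_b1.
have Cle : \sum_v (e x v && strong_support e v && ((f v : nat) <= 1)) <= deg e x.
  by rewrite degE; apply leq_sum => u _; case: (e x u) => //=; exact: leq_b1.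
have CD : maxdeg e <= 1 -> \sum_v (e x v && strong_support e v && ((f v : nat) <= 1)) = 0.
  move=> Hm; apply big1 => v _.
  case Hs: (strong_support e v); last by rewrite andbF.
  have := strong_deg _ _ _ Hs; have := @deg_max _ e v; lia.
set C := \sum_v (e x v && strong_support e v && ((f v : nat) <= 1)) in Cle CD *.
set N0 := \sum_u (e x u && ((f u : nat) == 0)) in N0le *.
set S := \sum_(u in nbhd e x) (f u : nat) in H0 *.
have: (f x : nat) = 0 \/ (f x : nat) = 1 \/ (f x : nat) = 2 by lia.
case=> [Hz|[Hz|Hz]]; rewrite Hz /=.
- have HS := H0 x; rewrite Hz eqxx /= in HS.
  have -> : (0 == 2) = false by [].
  rewrite andbF /=.
  case Hl: (leaf e x) => /=; last by lia.
  rewrite (_ : C = 0); first by lia.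
  apply big1 => v _; case Hxv: (e x v) => //=.
  move: HS; rewrite /S (leaf_nbhd _ _ _ _ Hl Hxv) big_set1 => HS.
  by rewrite (_ : ((f v : nat) <= 1) = false) ?andbF //; apply/negbTE; rewrite -ltnNge.
- have -> : (1 == 2) = false by [].
  rewrite andbF /=.
  case Hl: (leaf e x) => /=; last by lia.
  move/eqP: Hl => Hl; rewrite Hl in N0le Cle dmax.
  case: (leqP (maxdeg e) 1) => Hm; [rewrite (CD Hm)|]; lia.
- have Hsn := leq_b1 (strong_support e x && (2 == 2)).
  case Hl: (leaf e x) => /=.
    move/eqP: Hl => Hl; rewrite Hl in N0le Cle dmax.
    case: (leqP (maxdeg e) 1) => Hm; [rewrite (CD Hm)|]; lia.
  have := leq_trans N0le dmax. lia.
Qed.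
Lemma cardsum (T : finType) (P : pred T) : #|[set v | P v]| = \sum_v (P v : nat).
Proof. rewrite -sum1_card big_mkcond; apply eq_bigr => v _; rewrite inE; by case: (P v). Qed.

Lemma cid_bound (T : finType) (e : rel T) (f : {ffun T -> 'I_3}) :
  symmetric e -> isCID e f ->
  2 * (#|T| + num_strong_support e) <= (maxdeg e + 2) * weight f.
Proof.
move=> sym Hf.
pose A x := (f x : nat) * \sum_u (e x u && ((f u : nat) == 0)).
pose R1 x := 2 * (strong_support e x && ((f x : nat) == 2)).
pose R2 x := leaf e x * \sum_v (e x v && strong_support e v && ((f v : nat) <= 1)).
pose P1 x := (maxdeg e + 2) * (f x : nat).
pose P2 x := ((f x : nat) == 0) * \sum_(u in nbhd e x) (f u : nat).
have L : \sum_x (2 + A x + (R1 x + R2 x)) <= \sum_x (P1 x + P2 x).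
  by apply leq_sum => x _; exact: local.
have SL : \sum_x (2 + A x + (R1 x + R2 x)) = \sum_(x : T) 2 + \sum_x A x + (\sum_x R1 x + \sum_x R2 x) by rewrite -!big_split.
have SR : \sum_x (P1 x + P2 x) = \sum_x P1 x + \sum_x P2 x by rewrite -!big_split.
rewrite SL SR in L.
have E1 : \sum_(x : T) 2 = 2 * #|T| by rewrite sum_nat_const mulnC.
have E2 : \sum_x (maxdeg e + 2) * (f x : nat) = (maxdeg e + 2) * weight f by rewrite /weight big_distrr.
have E3 : \sum_x (f x : nat) * \sum_u (e x u && ((f u : nat) == 0))
          = \sum_x ((f x : nat) == 0) * \sum_(u in nbhd e x) (f u : nat).
  transitivity (\sum_x \sum_u (f x : nat) * (e x u && ((f u : nat) == 0))).
    by apply eq_bigr => x _; rewrite big_distrr.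
  rewrite exchange_big; apply eq_bigr => x _; rewrite sum_nbhd big_distrr; apply eq_bigr => u _ /=.
  rewrite (sym u x); case: (e x u); case: ((f x : nat) == 0); by rewrite ?mul0n ?muln0 ?mul1n ?muln1.
have E4 : 2 * num_strong_support e <= \sum_x 2 * (strong_support e x && ((f x : nat) == 2))
     + \sum_x leaf e x * \sum_v (e x v && strong_support e v && ((f v : nat) <= 1)).
  have -> : \sum_x leaf e x * \sum_v (e x v && strong_support e v && ((f v : nat) <= 1))
    = \sum_v \sum_x leaf e x * (e x v && strong_support e v && ((f v : nat) <= 1)).
    rewrite exchange_big /=; apply eq_bigr => x _; by rewrite big_distrr.
  rewrite -big_split /= /num_strong_support cardsum big_distrr /=.
  apply leq_sum => v _.
  case Hs: (strong_support e v); rewrite ?muln0 //= ?andbT.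
  case H2: ((f v : nat) == 2); first by rewrite muln1 leq_addr.
  have H1 : ((f v : nat) <= 1) by have := ltn_ord (f v); move/negbT: H2; lia.
  rewrite H1 muln0 add0n muln1.
  move: Hs; rewrite /strong_support cardsum => Hs.
  apply: leq_trans Hs _; apply: eq_leq; apply eq_bigr => x _.
  rewrite andbT (sym x v); by case: (e v x); case: (leaf e x).
move: L E4; rewrite /A /P1 /P2 /R1 /R2 E1 E2 E3.
set B := \sum_i ((f i : nat) == 0) * _. set S1 := \sum_x 2 * _. set S2 := \sum_x leaf e x * _.
move=> L E4. lia.
Qed.

Lemma gamma_bound (T : finType) (e : rel T) : symmetric e ->
  2 * (#|T| + num_strong_support e) <= (maxdeg e + 2) * gamma_cI e.
Proof.
move=> sym; rewrite /gamma_cI.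
apply: (big_ind (fun m => 2 * (#|T| + num_strong_support e) <= (maxdeg e + 2) * m)).
- have := cid_bound T e [ffun x : T => @Ordinal 3 1 isT] sym.
  have -> : weight [ffun x : T => @Ordinal 3 1 isT] = #|T|.
    rewrite /weight (eq_bigr (fun _ => 1)); last by move=> x _; rewrite ffunE.
    by rewrite sum_nat_const muln1.
  apply; apply/andP; split; apply/forallP => v; [rewrite ffunE // | apply/forallP => w; rewrite !ffunE /=; by case: (e v w)].
- move=> a b Ha Hb; rewrite /minn; by case: ifP.
- move=> f Hf; exact: cid_bound.
Qed.

Definition star_rel (D : nat) : rel 'I_D.+1 := fun i j => (i == ord0) != (j == ord0).

Lemma star_nbhd0 D : nbhd (star_rel D) ord0 = [set~ ord0].
Proof. by apply/setP => u; rewrite !inE /star_rel eqxx. Qed.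

Lemma star_nbhdi D (i : 'I_D.+1) : i != ord0 -> nbhd (star_rel D) i = [set ord0].
Proof. move=> Hi; apply/setP => u; rewrite !inE /star_rel (negbTE Hi); by case: (u == ord0). Qed.

Lemma star_deg0 D : deg (star_rel D) ord0 = D.
Proof. by rewrite /deg star_nbhd0 cardsC1 card_ord. Qed.

Lemma star_degi D (i : 'I_D.+1) : i != ord0 -> deg (star_rel D) i = 1.
Proof. by move=> Hi; rewrite /deg star_nbhdi // cards1. Qed.

Lemma star_leaf D (i : 'I_D.+1) : 2 <= D -> leaf (star_rel D) i = (i != ord0).
Proof.
move=> HD; rewrite /leaf; case: (eqVneq i ord0) => [->|Hi]; first by rewrite star_deg0 ?eqxx; move: HD; case: (D) => [|[|]].
by rewrite star_degi // Hi.
Qed.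

Lemma star_strong D (i : 'I_D.+1) : 2 <= D -> strong_support (star_rel D) i = (i == ord0).
Proof.
move=> HD; rewrite /strong_support; case: (eqVneq i ord0) => [->|Hi].
  rewrite (_ : [set u | star_rel D ord0 u & leaf (star_rel D) u] = [set~ ord0]) ?cardsC1 ?card_ord //.
  by apply/setP => u; rewrite !inE star_leaf // /star_rel eqxx andbb.
rewrite (_ : [set u | star_rel D i u & leaf (star_rel D) u] = set0) ?cards0 //.
apply/setP => u; rewrite !inE star_leaf // /star_rel (negbTE Hi) /=.
by case: (u == ord0).
Qed.

Lemma bigmin_le (I : eqType) (r : seq I) (P : pred I) (F : I -> nat) idx i0 :
  i0 \in r -> P i0 -> \big[minn/idx]_(i <- r | P i) F i <= F i0.
Proof.
elim: r => //= a r IH; rewrite in_cons big_cons => /orP [/eqP <- ->|Hin HP]; first exact: geq_minl.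
case: (P a); last exact: IH.
exact: leq_trans (geq_minr _ _) (IH Hin HP).
Qed.

Lemma star_maxdeg D : 2 <= D -> maxdeg (star_rel D) = D.
Proof.
move=> HD; apply/eqP; rewrite eqn_leq; apply/andP; split.
  apply/bigmax_leqP => i _; case: (eqVneq i ord0) => [->|Hi]; first by rewrite star_deg0.
  by rewrite star_degi //; lia.
by have := @deg_max _ (star_rel D) ord0; rewrite star_deg0.
Qed.

Lemma star_nss D : 2 <= D -> num_strong_support (star_rel D) = 1.
Proof.
move=> HD; rewrite /num_strong_support (_ : [set v | _] = [set ord0]) ?cards1 //.
by apply/setP => v; rewrite !inE star_strong.
Qed.

Lemma star_gamma D : 2 <= D -> gamma_cI (star_rel D) = 2.
Proof.
move=> HD; apply/eqP; rewrite eqn_leq; apply/andP; split.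
  pose g := [ffun v : 'I_D.+1 => if v == ord0 then @Ordinal 3 2 isT else @Ordinal 3 0 isT].
  have Hg : isCID (star_rel D) g.
    apply/andP; split; apply/forallP => v.
      rewrite ffunE; case: (eqVneq v ord0) => [->|Hv] //=.
      rewrite star_nbhdi // big_set1 ffunE eqxx //.
    apply/forallP => w; rewrite !ffunE /star_rel.
    by case: (v == ord0); case: (w == ord0).
  have Wg : weight g = 2.
    rewrite /weight (bigD1 ord0) //= ffunE eqxx /= big1 // => i Hi; by rewrite ffunE (negbTE Hi).
  rewrite /gamma_cI; apply: leq_trans; first apply: (bigmin_le _ _ _ _ _ g).
  - exact: mem_index_enum.
  - exact: Hg.
  - by rewrite Wg.
have Hsym : symmetric (star_rel D) by move=> i j; rewrite /star_rel eq_sym.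
have := gamma_bound _ (star_rel D) Hsym.
rewrite star_maxdeg // star_nss // card_ord.
rewrite (_ : 2 * (D.+1 + 1) = (D + 2) * 2) ?leq_pmul2l //; lia.
Qed.

Local Open Scope ring_scope.

Theorem corollary7 :
  (forall (T : finType) (e : rel T), symmetric e -> irreflexive e ->
     (2 * (#|T| + num_strong_support e)%:R / (maxdeg e + 2)%:R
       <= (gamma_cI e)%:R :> rat))
  /\
  (forall D : nat, (2 <= D)%N ->
     exists (n : nat) (e : rel 'I_n),
       [/\ symmetric e, irreflexive e, maxdeg e = D &
           (gamma_cI e)%:R
             = 2 * (n + num_strong_support e)%:R / (maxdeg e + 2)%:R :> rat]).
Proof.
split.
  move=> T e sym _.
  rewrite ler_pdivrMr ?ltr0n ?addn2 // -!natrM ler_nat.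
  have := gamma_bound T e sym; nia.
move=> D HD; exists D.+1, (star_rel D); split.
- by move=> i j; rewrite /star_rel eq_sym.
- by move=> i; rewrite /star_rel eqxx.
- exact: star_maxdeg.
rewrite star_gamma // star_maxdeg // star_nss //.
rewrite (_ : (D.+1 + 1 = D + 2)%N); last by lia.
rewrite mulfK // pnatr_eq0 addn2 //.
Qed.
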